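(* Let $(X,\mathcal{T})$ be a finite topological space. Then the consistency filtration $(\mathcal{S},a)\mapsto\mathbf{CF}(\mathcal{S},a)$ is a continuous function from $\mathbf{ShvPA}(X,\mathcal{T})$ to the objects of $\mathbf{CoarseFilt}$ equipped with the interleaving distance.
   Context: A sheaf $\mathcal{S}$ of pseudometric spaces on $(X,\mathcal{T})$ is a sheaf of sets with a pseudometric $d_U$ on each $\mathcal{S}(U)$ such that all restriction maps are continuous. An assignment is any $a\in\prod_{U\in\mathcal{T}}\mathcal{S}(U)$; the assignment pseudometric is $D(a,b)=\sup_U d_U(a(U),b(U))$. For open $U$, the local consistency radius is $c_{\mathcal{S}}(a,U)=\sup_{V_1\subseteq V_2\subseteq U,\,V_i\in\mathcal{T}} d_{V_1}\big(\mathcal{S}(V_1\subseteq V_2)(a(V_2)),a(V_1)\big)$. For $\epsilon\in\mathbb{R}$, $\mathcal{M}_{\mathcal{S},a}(\epsilon)$ is the collection of open sets $U$ with $c_{\mathcal{S}}(a,U)<\epsilon$ that are maximal under inclusion among such sets, and $\mathbf{CF}(\mathcal{S},a)=(X,\mathcal{T},\epsilon\mapsto\mathcal{M}_{\mathcal{S},a}(\epsilon))$. Topology on $\mathbf{ShvPA}(X,\mathcal{T})$ (the set of pairs $(\mathcal{S},a)$): partition pairs by the isomorphism class of the underlying sheaf; in a class with fixed representative $\mathcal{S}$, every sheaf in the class is regarded as having the same stalks $\mathcal{S}(U)$ but possibly different restriction maps, so the class is identified with a subset of $\prod_{U\subseteq V\in\mathcal{T}}C(\mathcal{S}(V),\mathcal{S}(U))\times\prod_{U\in\mathcal{T}}\mathcal{S}(U)$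 with the subspace topology, each $C(\mathcal{S}(V),\mathcal{S}(U))$ having the topology of uniform convergence and $\prod_U\mathcal{S}(U)$ the topology of the assignment pseudometric; $\mathbf{ShvPA}(X,\mathcal{T})$ is the disjoint union of the classes. A collection $\mathcal{V}$ refines $\mathcal{U}$ if each member of $\mathcal{V}$ lies in some member of $\mathcal{U}$. $\mathbf{CoarseFilt}$: objects are triples $(X,\mathcal{T},\mathbf{V})$, $\mathbf{V}:\mathbb{R}\to2^{\mathcal{T}}$ with $\mathbf{V}(t)$ refining $\mathbf{V}(t')$ for $t\le t'$; a morphism $(X,\mathcal{T},\mathbf{V})\to(Y,\mathcal{S},\mathbf{U})$ is an order-preserving $\phi:\mathbb{R}\to\mathbb{R}$ and continuous maps $f_t:X\to Y$ such that $\mathbf{V}(s)$ refines $f_t^{-1}(\mathbf{U}(t))$ for all $t$ and all $s\in\phi^{-1}(t)$. A pair of morphisms $(X,\mathcal{T},\mathbf{V})\to(Y,\mathcal{S},\mathbf{U})$ along $\phi$ and $(Y,\mathcal{S},\mathbf{U})\to(X,\mathcal{T},\mathbf{V})$ along $\psi$ is an $\epsilon$-interleaving if for all $t$: $|\phi(t)-t|<\epsilon$, $|\psi(t)-t|<\epsilon$, $\mathbf{V}(\inf(\psi\circ\phi)^{-1}(t))$ refines $\mathbf{V}(t)$, and $\mathbf{U}(\inf(\phi\circ\psi)^{-1}(t))$ refines $\mathbf{U}(t)$. The interleaving distance between two objects is the infimum of all $\epsilon$ for which an $\epsilon$-interleaving between them exists. *)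

(* Defs.v *)
From HB Require Import structures.
From mathcomp Require Import all_boot all_order all_algebra.
From mathcomp Require Import reals constructive_ereal ereal.
Set Implicit Arguments.
Unset Strict Implicit.
Unset Printing Implicit Defensive.
Import Order.TTheory GRing.Theory Num.Theory.
Local Open Scope ring_scope.

Definition is_topology (X : finType) (T : {set {set X}}) : Prop :=
  [/\ set0 \in T, setT \in T,
      (forall U V, U \in T -> V \in T -> U :|: V \in T) &
      (forall U V, U \in T -> V \in T -> U :&: V \in T)].

Definition opens (X : finType) (T : {set {set X}}) := {U : {set X} | U \in T}.

Definition top_continuous (X Y : finType) (TX : {set {set X}})
  (TY : {set {set Y}}) (f : X -> Y) : Prop :=
  forall W, W \in TY -> f @^-1: W \in TX.

Definition is_pseudometric (R : realType) (A : Type) (d : A -> A -> R) : Prop :=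
  [/\ (forall x, d x x = 0), (forall x y, d x y = d y x) &
      (forall x y z, d x z <= d x y + d y z)].

Definition pm_continuous (R : realType) (A B : Type) (dA : A -> A -> R)
  (dB : B -> B -> R) (f : A -> B) : Prop :=
  forall x (e : R), 0 < e -> exists2 del : R, 0 < del &
    forall y, dA x y < del -> dB (f x) (f y) < e.

(* The stalks [S U] with pseudometrics
   [d U] are fixed; a sheaf structure on them is a family of restriction
   maps [rho U V : S V -> S U]; only its values for [U \subset V] matter
   (the other values are unconstrained junk and never used). *)
Definition restr_maps (X : finType) (T : {set {set X}}) (S : opens T -> Type) :=
  forall U V : opens T, S V -> S U.

Definition is_sheaf_pm (R : realType) (X : finType) (T : {set {set X}})
  (S : opens T -> Type) (d : forall U, S U -> S U -> R)
  (rho : restr_maps S) : Prop :=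
  [/\
      (forall U (x : S U), rho U U x = x),
      (forall U V W : opens T, val U \subset val V -> val V \subset val W ->
         forall x : S W, rho U V (rho V W x) = rho U W x),
      (forall U V : opens T, val U \subset val V ->
         pm_continuous (d V) (d U) (rho U V)) &
      (forall (U : opens T) (C : {set opens T}),
         \bigcup_(W in C) val W = val U ->
         forall s : forall W : opens T, W \in C -> S W,
           (forall i j (hi : i \in C) (hj : j \in C) (W : opens T),
              val W = val i :&: val j -> rho W i (s i hi) = rho W j (s j hj)) ->
           exists! x : S U, forall i (hi : i \in C), rho i U x = s i hi)].

(* isomorphism of the underlying sheaves of sets (stalks fixed) *)
Definition sheaf_iso (X : finType) (T : {set {set X}}) (S : opens T -> Type)
  (rho rho' : restr_maps S) : Prop :=
  exists h : forall U, S U -> S U,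
    (forall U, bijective (h U)) /\
    (forall U V : opens T, val U \subset val V ->
       forall x : S V, h U (rho U V x) = rho' U V (h V x)).

(* assignments and the assignment pseudometric (max = sup, T finite) *)
Definition assignment (X : finType) (T : {set {set X}}) (S : opens T -> Type) :=
  forall U : opens T, S U.

Definition assign_dist (R : realType) (X : finType) (T : {set {set X}})
  (S : opens T -> Type) (d : forall U, S U -> S U -> R)
  (a b : assignment S) : R :=
  \big[Num.max/0]_(U : opens T) d U (a U) (b U).

(* local consistency radius (sup over a finite nonempty family of
   nonnegative numbers, written as a max) *)
Definition cons_radius (R : realType) (X : finType) (T : {set {set X}})
  (S : opens T -> Type) (d : forall U, S U -> S U -> R)
  (rho : restr_maps S) (a : assignment S) (U : opens T) : R :=
  \big[Num.max/0]_(p : opens T * opens T |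
                     (val p.1 \subset val p.2) && (val p.2 \subset val U))
     d p.1 (rho p.1 p.2 (a p.2)) (a p.1).

Definition cf_M (R : realType) (X : finType) (T : {set {set X}})
  (S : opens T -> Type) (d : forall U, S U -> S U -> R)
  (rho : restr_maps S) (a : assignment S) (eps : R) : {set {set X}} :=
  (fun W : opens T => val W) @:
    [set W : opens T | (cons_radius d rho a W < eps) &&
       [forall W' : opens T,
          ((val W \subset val W') && (cons_radius d rho a W' < eps))
            ==> (val W' == val W)]].

Definition refines (X : finType) (A B : {set {set X}}) : Prop :=
  forall V, V \in A -> exists2 U, U \in B & V \subset U.

Definition is_coarse_filt (R : realType) (X : finType) (T : {set {set X}})
  (V : R -> {set {set X}}) : Prop :=
  (forall t, V t \subset T) /\
  (forall t t', t <= t' -> refines (V t) (V t')).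

Definition cf_morphism (R : realType) (X Y : finType) (TX : {set {set X}})
  (TY : {set {set Y}}) (V : R -> {set {set X}}) (U : R -> {set {set Y}})
  (phi : R -> R) (f : R -> X -> Y) : Prop :=
  [/\ {homo phi : s t / s <= t},
      (forall t, top_continuous TX TY (f t)) &
      (forall t s, phi s = t ->
         refines (V s) ((fun W : {set Y} => f t @^-1: W) @: U t))].

Definition is_inf (R : realType) (E : R -> Prop) (s : R) : Prop :=
  (forall x, E x -> s <= x) /\
  (forall b, (forall x, E x -> b <= x) -> b <= s).

Definition cf_interleaving (R : realType) (X Y : finType) (TX : {set {set X}})
  (TY : {set {set Y}}) (V : R -> {set {set X}}) (U : R -> {set {set Y}})
  (eps : R) : Prop :=
  exists (phi : R -> R) (f : R -> X -> Y) (psi : R -> R) (g : R -> Y -> X),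
  [/\ cf_morphism TX TY V U phi f, cf_morphism TY TX U V psi g,
      (forall t, `|phi t - t| < eps /\ `|psi t - t| < eps),
      (forall t, exists2 s, is_inf (fun x => psi (phi x) = t) s &
                             refines (V s) (V t)) &
      (forall t, exists2 s, is_inf (fun x => phi (psi x) = t) s &
                             refines (U s) (U t))].

(* interleaving distance, in the extended reals (+oo if no interleaving) *)
Definition interleaving_dist (R : realType) (X Y : finType)
  (TX : {set {set X}}) (TY : {set {set Y}}) (V : R -> {set {set X}})
  (U : R -> {set {set Y}}) : \bar R :=
  ereal_inf (fun x : \bar R =>
    exists2 e : R, cf_interleaving TX TY V U e & x = (e%:E)%E).

(* Main.v *)
Require Import Defs.
From HB Require Import structures.
From mathcomp Require Import all_boot all_order all_algebra.
From mathcomp Require Import reals constructive_ereal ereal.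
From mathcomp Require Import boolp lra.
Import Order.TTheory GRing.Theory Num.Theory.
Local Open Scope ring_scope.

Set Implicit Arguments.
Section Helpers.
Variable R : realType.

Lemma bigmax_ub (I : finType) (P : pred I) (F : I -> R) (x0 : R) (i : I) :
  P i -> F i <= \big[Num.max/x0]_(j | P j) F j.
Proof.
move=> Pi; have : i \in index_enum I by rewrite mem_index_enum.
elim: (index_enum I) => [//|j r IH]; rewrite big_cons inE.
case/orP => [/eqP <-|/IH H]; first by rewrite Pi le_max lexx.
by case: (P j) => //; rewrite le_max H orbT.
Qed.

Lemma bigmax_le (I : finType) (P : pred I) (F : I -> R) (x0 b : R) :
  x0 <= b -> (forall j, P j -> F j <= b) -> \big[Num.max/x0]_(j | P j) F j <= b.
Proof.
move=> h0 h; elim/big_ind: _ => // x y hx hy; by rewrite ge_max hx hy.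
Qed.

Lemma bigmin_lb (I : finType) (P : pred I) (F : I -> R) (x0 : R) (i : I) :
  P i -> \big[Num.min/x0]_(j | P j) F j <= F i.
Proof.
move=> Pi; have : i \in index_enum I by rewrite mem_index_enum.
elim: (index_enum I) => [//|j r IH]; rewrite big_cons inE.
case/orP => [/eqP <-|/IH H]; first by rewrite Pi ge_min lexx.
by case: (P j) => //; rewrite ge_min H orbT.
Qed.

Lemma bigmin_gt0 (I : finType) (P : pred I) (F : I -> R) (x0 : R) :
  0 < x0 -> (forall j, P j -> 0 < F j) -> 0 < \big[Num.min/x0]_(j | P j) F j.
Proof.
move=> h0 h; elim/big_ind: _ => // x y hx hy; by rewrite lt_min hx hy.
Qed.

Lemma tri4 (A : Type) (d : A -> A -> R) : is_pseudometric d ->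
  forall x1 x2 x3 y2 y1, d x1 y1 <= d x1 x2 + d x2 x3 + d x3 y2 + d y2 y1.
Proof.
case=> _ _ tr x1 x2 x3 y2 y1.
apply: (le_trans (tr x1 y2 y1)); rewrite lerD2r.
apply: (le_trans (tr x1 x3 y2)); rewrite lerD2r.
exact: tr.
Qed.

End Helpers.

Unset Implicit Arguments.
Section Main.
Variables (R : realType) (X : finType) (T : {set {set X}}).
Variables (S : opens T -> Type) (d : forall U, S U -> S U -> R).
Set Implicit Arguments.

Lemma exists_max {rho : restr_maps S} {a : assignment S} {t : R} {W : opens T} :
  cons_radius d rho a W < t ->
  exists2 W' : opens T, val W \subset val W' & val W' \in cf_M d rho a t.
Proof.
move=> rW.
pose P := fun W' : opens T => (val W \subset val W') && (cons_radius d rho a W' < t).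
have PW : P W by rewrite /P subxx rW.
case: (arg_maxnP (fun W' : opens T => #|val W'|) PW) => W' /andP[sW rW'] Hmax.
exists W' => //; apply: imset_f; rewrite inE rW' /=.
apply/forallP => W''; apply/implyP => /andP[s' r'].
have h : (#|val W''| <= #|val W'|)%N.
  by apply: Hmax; rewrite /P r' (subset_trans sW s').
by rewrite eq_sym eqEcard s' h.
Qed.

Lemma cfM_mono rho a (t t' : R) : t <= t' ->
  refines (cf_M d rho a t) (cf_M d rho a t').
Proof.
move=> tt' V /imsetP[W0]; rewrite inE => /andP[r0 _] ->.
have [W' sW HW'] := exists_max (lt_le_trans r0 tt').
by exists (val W').
Qed.

Lemma cfM_sub rho a t : cf_M d rho a t \subset T.
Proof. by apply/subsetP => V /imsetP[W0 _ ->]; exact: valP W0. Qed.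

Lemma cfM_shift rho1 a1 rho2 a2 (c s : R) :
  (forall W, cons_radius d rho2 a2 W <= cons_radius d rho1 a1 W + c) ->
  refines (cf_M d rho1 a1 s) (cf_M d rho2 a2 (s + c)).
Proof.
move=> H V /imsetP[W0]; rewrite inE => /andP[r0 _] ->.
have r2 : cons_radius d rho2 a2 W0 < s + c.
  by apply: (le_lt_trans (H W0)); rewrite ltrD2r.
have [W' sW HW'] := exists_max r2.
by exists (val W').
Qed.

Lemma morph_shift (V U : R -> {set {set X}}) (c : R) :
  (forall s, refines (V s) (U (s + c))) ->
  cf_morphism T T V U (fun x => x + c) (fun _ (x : X) => x).
Proof.
move=> H; split.
- by move=> x y h; rewrite lerD2r.
- move=> t W HW.
  have -> : (fun x : X => x) @^-1: W = W by apply/setP => x; rewrite inE.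
  exact: HW.
- move=> t s <- W HW.
  have [W' HW' sW] := H s W HW.
  exists ((fun x : X => x) @^-1: W'); first exact: imset_f.
  by apply/subsetP => x hx; rewrite inE (subsetP sW x hx).
Qed.

Lemma rad_perturb {rho1 rho2 : restr_maps S} {a1 a2 : assignment S} {k : R} : 0 <= k ->
  (forall V1 V2 : opens T, val V1 \subset val V2 ->
     d V1 (rho2 V1 V2 (a2 V2)) (a2 V1) <= d V1 (rho1 V1 V2 (a1 V2)) (a1 V1) + k) ->
  forall W, cons_radius d rho2 a2 W <= cons_radius d rho1 a1 W + k.
Proof.
move=> k0 H W; rewrite /cons_radius.
apply: bigmax_le.
  apply: addr_ge0 => //.
  elim/big_rec: _ => // i x _ hx; by rewrite le_max hx orbT.
move=> p /andP[s1 s2].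
apply: (le_trans (H _ _ s1)); rewrite lerD2r.
by apply: (@bigmax_ub _ _ (fun p : opens T * opens T =>
  (val p.1 \subset val p.2) && (val p.2 \subset val W))); rewrite s1 s2.
Qed.

End Main.
Arguments rad_perturb {R X T S d rho1 rho2 a1 a2 k}.
Arguments exists_max {R X T S d rho a t W}.
Arguments cfM_mono {R X T S d rho a t t'}.
Arguments cfM_sub {R X T S d rho a t}.
Arguments cfM_shift {R X T S d rho1 a1 rho2 a2 c s}.
Arguments morph_shift {R X T V U c}.

Unset Implicit Arguments.

Theorem theorem48 (R : realType) (X : finType) (T : {set {set X}})
  (HT : is_topology T)
  (S : opens T -> Type) (d : forall U, S U -> S U -> R)
  (Hd : forall U, is_pseudometric (d U)) :
  (forall (rho : restr_maps S) (a : assignment S),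
     is_sheaf_pm d rho -> is_coarse_filt T (cf_M d rho a)) /\
  (forall (rho : restr_maps S) (a : assignment S),
     is_sheaf_pm d rho ->
     forall eps : R, 0 < eps ->
     exists2 del : R, 0 < del &
       forall (rho' : restr_maps S) (a' : assignment S),
         is_sheaf_pm d rho' -> sheaf_iso rho rho' ->
         (forall U V : opens T, val U \subset val V ->
            forall x : S V, d U (rho U V x) (rho' U V x) < del) ->
         assign_dist d a a' < del ->
         (interleaving_dist T T (cf_M d rho a) (cf_M d rho' a') < eps%:E)%E).
Proof.
have part1 : forall (rho : restr_maps S) (a : assignment S),
     is_coarse_filt T (cf_M d rho a).
  move=> rho a; split.
    by move=> t; apply: cfM_sub.
  by move=> t t'; apply: cfM_mono.
split; first by move=> rho a _; exact: part1.
move=> rho a [_ _ Hcont _] eps eps0.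
pose e16 := eps / 16.
have e160 : 0 < e16 by rewrite /e16; lra.
have Hc : forall p : opens T * opens T, exists del : R, 0 < del /\
   (val p.1 \subset val p.2 -> forall y, d p.2 (a p.2) y < del ->
       d p.1 (rho p.1 p.2 (a p.2)) (rho p.1 p.2 y) < e16).
  move=> [V1 V2] /=; case: (boolP (val V1 \subset val V2)) => s12.
    have [del del0 Hdel] := Hcont V1 V2 s12 (a V2) e16 e160.
    by exists del; split => // _.
  by exists 1; split => //; rewrite ltr01.
have [delta Hdelta] := choice Hc.
pose del := \big[Num.min/e16]_(p : opens T * opens T) delta p.
have del0 : 0 < del by apply: bigmin_gt0 => // j _; case: (Hdelta j).
have dele : del <= e16.
  by rewrite /del; elim/big_rec: _ => // i x _ hx; rewrite ge_min hx orbT.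
have deld : forall p, del <= delta p by move=> p; exact: bigmin_lb.
exists del => // rho' a' _ _ H1 Ha.
have Ha' : forall U, d U (a U) (a' U) < del.
  move=> U; apply: le_lt_trans Ha.
  exact: (@bigmax_ub _ _ (fun _ => true)).
have Hcc : forall V1 V2 : opens T, val V1 \subset val V2 ->
    d V1 (rho V1 V2 (a V2)) (rho V1 V2 (a' V2)) < e16.
  move=> V1 V2 s12; case: (Hdelta (V1, V2)) => _ /= h; apply: h => //.
  exact: lt_le_trans (Ha' V2) (deld (V1, V2)).
have sym : forall U (x y : S U), d U x y = d U y x.
  by move=> U x y; case: (Hd U) => _ h _; exact: h.
pose c := eps / 4.
have k0 : 0 <= del + e16 + del by lra.
have fwd : forall W, cons_radius d rho' a' W <= cons_radius d rho a W + c.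
  have hp : forall V1 V2 : opens T, val V1 \subset val V2 ->
     d V1 (rho' V1 V2 (a' V2)) (a' V1) <= d V1 (rho V1 V2 (a V2)) (a V1) + (del + e16 + del).
    move=> V1 V2 s12.
    apply: le_trans (tri4 (Hd V1) _ (rho V1 V2 (a' V2)) (rho V1 V2 (a V2)) (a V1) _) _.
    have h1 := H1 _ _ s12 (a' V2); have h2 := Hcc _ _ s12; have h3 := Ha' V1.
    rewrite sym in h1; rewrite sym in h2.
    lra.
  move=> W; apply: le_trans (rad_perturb k0 hp W) _.
  move: dele; rewrite lerD2l /c /e16 => dele'; lra.
have bwd : forall W, cons_radius d rho a W <= cons_radius d rho' a' W + c.
  have hp : forall V1 V2 : opens T, val V1 \subset val V2 ->
     d V1 (rho V1 V2 (a V2)) (a V1) <= d V1 (rho' V1 V2 (a' V2)) (a' V1) + (del + e16 + del).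
    move=> V1 V2 s12.
    apply: le_trans (tri4 (Hd V1) _ (rho V1 V2 (a' V2)) (rho' V1 V2 (a' V2)) (a' V1) _) _.
    have h1 := H1 _ _ s12 (a' V2); have h2 := Hcc _ _ s12; have h3 := Ha' V1.
    rewrite sym in h3.
    lra.
  move=> W; apply: le_trans (rad_perturb k0 hp W) _.
  move: dele; rewrite lerD2l /c /e16 => dele'; lra.
apply: le_lt_trans (ereal_inf_lbound (x := ((eps / 2)%:E)%E) _) _; last first.
  rewrite lte_fin; lra.
exists (eps / 2) => //.
exists (fun x => x + c), (fun _ (x : X) => x), (fun x => x + c), (fun _ (x : X) => x).
split.
- apply: morph_shift => s; exact: cfM_shift.
- apply: morph_shift => s; exact: cfM_shift.
- move=> t; have -> : t + c - t = c by rewrite addrC addKr.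
  have c0 : 0 < c by rewrite /c; lra.
  by rewrite gtr0_norm // /c; split; lra.
- move=> t; exists (t - c - c); last by apply: cfM_mono; rewrite /c; lra.
  split; first by move=> x <-; rewrite !addrK.
  by move=> b Hb; apply: Hb; rewrite !subrK.
- move=> t; exists (t - c - c); last by apply: cfM_mono; rewrite /c; lra.
  split; first by move=> x <-; rewrite !addrK.
  by move=> b Hb; apply: Hb; rewrite !subrK.
Qed.
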